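(* Let $a,b,c$ be nonzero and $G_1,G_2$ parameters, and define the transformation (a Dehn twist, obtained as a composition of two generalized mutations) $$a'=\frac{b^2+c^2+G_1bc}{a},\qquad b'=\frac{(a')^2+c^2+G_2a'c}{b},\qquad c'=c.$$ Then the function $$G_\gamma=G_2\frac{c}{b}+G_1\frac{c}{a}+\frac{a}{b}+\frac{b}{a}+\frac{c^2}{ab}$$ is preserved by this transformation, i.e. $G_\gamma(a',b',c)=G_\gamma(a,b,c)$.
   Context: Here $a,b,c$ are $\lambda$-lengths of arcs on a Riemann sphere with three holes and two bordered cusps on one hole ($PV$ case), $G_1,G_2$ encode the perimeters of the two uncusped holes, and $G_\gamma$ is the geodesic function of the closed geodesic $\gamma$ encircling these two holes. The claim is an identity of rational functions. *)

(* Defs.v *)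
From mathcomp Require Import all_boot all_algebra.
Set Implicit Arguments. Unset Strict Implicit. Unset Printing Implicit Defensive.
Import GRing.Theory.
Local Open Scope ring_scope.

Definition Ggamma (F : fieldType) (G1 G2 a b c : F) : F :=
  G2 * (c / b) + G1 * (c / a) + a / b + b / a + c ^+ 2 / (a * b).

Definition twist_a (F : fieldType) (G1 a b c : F) : F :=
  (b ^+ 2 + c ^+ 2 + G1 * b * c) / a.
Definition twist_b (F : fieldType) (G1 G2 a b c : F) : F :=
  let a' := twist_a G1 a b c in (a' ^+ 2 + c ^+ 2 + G2 * a' * c) / b.

(* Main.v *)
Require Import Defs.
From mathcomp Require Import all_boot all_algebra.
From mathcomp Require Import ring.
Import GRing.Theory.
Local Open Scope ring_scope.

Theorem mainTheorem10 (F : fieldType) (G1 G2 a b c : F) :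
  a != 0 -> b != 0 -> c != 0 ->
  twist_a G1 a b c != 0 -> twist_b G1 G2 a b c != 0 ->
  Ggamma G1 G2 (twist_a G1 a b c) (twist_b G1 G2 a b c) c = Ggamma G1 G2 a b c.
Proof.
move=> ha hb hc ha' hb'.
move: hb'; rewrite /twist_b -/(twist_a G1 a b c).
move: ha'; set x := twist_a G1 a b c => ha'.
have hx : x * a = b ^+ 2 + c ^+ 2 + G1 * b * c.
  by rewrite /x /twist_a divfK.
set y := (x ^+ 2 + c ^+ 2 + G2 * x * c) / b => hy0.
have hy : y * b = x ^+ 2 + c ^+ 2 + G2 * x * c by rewrite /y divfK.
clearbody x y.
have e1 : Ggamma G1 G2 x y c = (b + G1 * c + y) / x.
  apply/eqP; rewrite -subr_eq0; apply/eqP.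
  have -> : Ggamma G1 G2 x y c - (b + G1 * c + y) / x =
     (G2 * c * x + x ^+ 2 + c ^+ 2 - y * b) / (x * y).
    by rewrite /Ggamma; field; rewrite ?ha' ?hy0.
  by rewrite hy; rewrite [X in X / _](_ : _ = 0) ?mul0r //; ring.
have e2 : Ggamma G1 G2 a b c = (x + a + G2 * c) / b.
  apply/eqP; rewrite -subr_eq0; apply/eqP.
  have -> : Ggamma G1 G2 a b c - (x + a + G2 * c) / b =
     (G1 * c * b + b ^+ 2 + c ^+ 2 - x * a) / (a * b).
    by rewrite /Ggamma; field; rewrite ?ha ?hb.
  by rewrite hx; rewrite [X in X / _](_ : _ = 0) ?mul0r //; ring.
rewrite e1 e2.
apply/eqP; rewrite eqr_div //; apply/eqP.
have : (b + G1 * c + y) * b - x * (x + a + G2 * c) = 0.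
  have -> : (b + G1 * c + y) * b - x * (x + a + G2 * c) =
    y * b + b ^+ 2 + G1 * c * b - x ^+ 2 - x * a - G2 * c * x by ring.
  rewrite hy hx; ring.
move=> h; apply/eqP; rewrite -subr_eq0; apply/eqP; rewrite -h; ring.
Qed.
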